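(* Let $k,k'\ge1$ be integers and $\varepsilon>0$. Let $x,y\in\mathbb{R}^k_{\ge0}$, $x',y'\in\mathbb{R}^{k'}_{\ge0}$ and $r,r'\in\mathbb{R}$ satisfy $$(x^\top\mathbf{1}_k)^2+\|x\|^2=(x'^\top\mathbf{1}_{k'})^2+\|x'\|^2=\varepsilon^2$$ and $$x^\top\mathbf{1}_k+x'^\top\mathbf{1}_{k'}=r+r'+\varepsilon\sqrt2.$$ Then $\|x+y+r\mathbf{1}_k\|^2+\|x'+y'+r'\mathbf{1}_{k'}\|^2\ge\varepsilon^2$.
   Context: $\mathbf{1}_k$ denotes the all-ones vector in $\mathbb{R}^k$, $\|\cdot\|$ the Euclidean norm, and $\mathbb{R}^k_{\ge0}$ the vectors with nonnegative entries. *)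

(* Defs.v *)
From mathcomp Require Import all_boot all_order all_algebra.
From mathcomp Require Import all_classical all_reals.
Set Implicit Arguments. Unset Strict Implicit. Unset Printing Implicit Defensive.
Import Order.TTheory GRing.Theory Num.Theory.
Local Open Scope ring_scope.

Definition ones (R : realType) (k : nat) : 'cV[R]_k := const_mx 1.
Definition dotv (R : realType) (k : nat) (x y : 'cV[R]_k) : R :=
  \sum_(i < k) x i 0 * y i 0.
Definition sqnorm (R : realType) (k : nat) (x : 'cV[R]_k) : R := dotv x x.
Definition nonneg_vec (R : realType) (k : nat) (x : 'cV[R]_k) : Prop :=
  forall i, 0 <= x i 0.

(* Main.v *)
Require Import Defs.
From mathcomp Require Import all_boot all_order all_algebra.
From mathcomp Require Import all_classical all_reals.
From mathcomp Require Import ring lra.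
Import Order.TTheory GRing.Theory Num.Theory.
Set Implicit Arguments. Unset Strict Implicit.
Local Open Scope ring_scope.
Lemma final (R: realFieldType) (e w s s' q q' r r' Z Z' : R) :
  0 < e -> 0 < w -> w^+2 = 2 -> 0 < s -> 0 < s' -> 0 < q -> 0 <= q' ->
  q <= s^+2 -> q' <= s'^+2 -> s^+2 + q = e^+2 -> s'^+2 + q' = e^+2 ->
  s + s' = r + r' + e * w ->
  (forall l, 0 <= l -> 2 * l * (q + r * s) - l^+2 * q <= Z) ->
  (forall l, 0 <= l -> 2 * l * (q' + r' * s') - l^+2 * q' <= Z') ->
  e^+2 <= Z + Z'.
Proof.
move=> e0 w0 w2 s0 s'0 q0 q'0 qs q's hq hq' hr hZ hZ'.
have se : s <= e.
  rewrite leNgt; apply/negP => H.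
  have : 0 < (s - e) * (s + e) by apply: mulr_gt0; lra.
  nra.
have s'e : s' <= e.
  rewrite leNgt; apply/negP => H.
  have : 0 < (s' - e) * (s' + e) by apply: mulr_gt0; lra.
  nra.
have ews : e <= w * s.
  rewrite leNgt; apply/negP => H.
  have : 0 < (e - w * s) * (e + w * s) by apply: mulr_gt0; nra.
  nra.
have ews' : e <= w * s'.
  rewrite leNgt; apply/negP => H.
  have : 0 < (e - w * s') * (e + w * s') by apply: mulr_gt0; nra.
  nra.
have sn : s != 0 by rewrite gt_eqF.
have s'n : s' != 0 by rewrite gt_eqF.
set p := e / s. set p' := e / s'.
have p1 : 1 <= p by rewrite /p ler_pdivlMr // mul1r.
have p'1 : 1 <= p' by rewrite /p' ler_pdivlMr // mul1r.
have pw : p <= w by rewrite /p ler_pdivrMr.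
have p'w : p' <= w by rewrite /p' ler_pdivrMr.
have w2' : w <= 2 by nra.
set M := e * (p + p' - w).
set D := p^+2 + p'^+2 - 2.
have M0 : 0 <= M by rewrite /M; nra.
have Dq : D = q / s^+2 + q' / s'^+2.
  have -> : q = e^+2 - s^+2 by rewrite -hq; ring.
  have -> : q' = e^+2 - s'^+2 by rewrite -hq'; ring.
  rewrite /D /p /p'; field; by rewrite sn s'n.
have D0 : 0 < D.
  rewrite Dq; apply: ltr_pwDl; first by apply: divr_gt0 => //; nra.
  by apply: divr_ge0 => //; nra.
have Dn : D != 0 by rewrite gt_eqF.
set a := M / D.
have a0 : 0 <= a by rewrite /a divr_ge0 // ltW.
have := hZ (a / s) (divr_ge0 a0 (ltW s0)).
have := hZ' (a / s') (divr_ge0 a0 (ltW s'0)).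
move=> H1 H2.
have key : 2 * (a / s) * (q + r * s) - (a / s)^+2 * q
   + (2 * (a / s') * (q' + r' * s') - (a / s')^+2 * q') = M^+2 / D.
  have -> : r' = s + s' - e * w - r by rewrite hr; ring.
  have -> : q = e^+2 - s^+2 by rewrite -hq; ring.
  have -> : q' = e^+2 - s'^+2 by rewrite -hq'; ring.
  rewrite /a /M /D /p /p'. field. rewrite sn s'n /=.
  have <- : D * (s * s')^+2 = (e * s') ^+ 2 + (e * s) ^+ 2 + -2 * (s * s') ^+ 2.
    rewrite /D /p /p'; field; by rewrite sn s'n.
  by rewrite mulf_neq0 // expf_neq0 // mulf_neq0.
have : e^+2 <= M^+2 / D.
  rewrite ler_pdivlMr //.
  have E : M^+2 - e^+2 * D = 2 * e^+2 * (w - p) * (w - p') + e^+2 * (2 - w^+2).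
    rewrite /M /D; ring.
  rewrite w2 subrr mulr0 addr0 in E.
  rewrite -subr_ge0 E; apply: mulr_ge0; [apply: mulr_ge0|]; rewrite ?subr_ge0 //; nra.
lra.
Qed.
Lemma dot1 (R : realType) k (x : 'cV[R]_k) : dotv x (ones R k) = \sum_i x i 0.
Proof. by apply: eq_bigr => i _; rewrite /ones mxE mulr1. Qed.

Lemma s_ge0 (R : realType) k (x : 'cV[R]_k) : nonneg_vec x -> 0 <= dotv x (ones R k).
Proof. by move=> hx; rewrite dot1 sumr_ge0. Qed.

Lemma q_ge0 (R : realType) k (x : 'cV[R]_k) : 0 <= sqnorm x.
Proof. by rewrite /sqnorm /dotv sumr_ge0 // => i _; rewrite -expr2 sqr_ge0. Qed.

Lemma q_le (R : realType) k (x : 'cV[R]_k) : nonneg_vec x ->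
  sqnorm x <= (dotv x (ones R k))^+2.
Proof.
move=> hx; rewrite dot1 expr2 /sqnorm /dotv mulr_sumr.
apply: ler_sum => i _; rewrite mulrC; apply: ler_wpM2r => //.
by rewrite (bigD1 i) //= lerDl sumr_ge0.
Qed.

Lemma q_gt0 (R : realType) k (x : 'cV[R]_k) (e : R) : 0 < e ->
  (dotv x (ones R k))^+2 + sqnorm x = e^+2 -> 0 < sqnorm x.
Proof.
move=> e0 h; rewrite lt0r q_ge0 andbT; apply/negP => /eqP q0.
move: h; rewrite q0 addr0 dot1.
have -> : \sum_i x i 0 = 0.
  apply: big1 => i _.
  move/eqP: q0; rewrite /sqnorm /dotv psumr_eq0 => [/allP H|j _]; last by rewrite -expr2 sqr_ge0.
  by have := H i (mem_index_enum i); rewrite /= mulf_eq0 orbb => /eqP.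
move=> h; have : e^+2 == 0 by rewrite -h expr2 mulr0.
by rewrite expf_eq0 /= (gt_eqF e0).
Qed.

Lemma bound (R : realType) k (x y : 'cV[R]_k) (r l : R) :
  nonneg_vec x -> nonneg_vec y -> 0 <= l ->
  2 * l * (sqnorm x + r * dotv x (ones R k)) - l^+2 * sqnorm x
    <= sqnorm (x + y + r *: ones R k).
Proof.
move=> hx hy l0.
have -> : 2 * l * (sqnorm x + r * dotv x (ones R k)) - l^+2 * sqnorm x
   = \sum_i (2 * l * (x i 0 * x i 0 + r * x i 0) - l^+2 * (x i 0 * x i 0)).
  rewrite dot1 /sqnorm /dotv sumrB -!mulr_sumr big_split /= -mulr_sumr //.
rewrite /sqnorm /dotv; apply: ler_sum => i _.
rewrite !mxE mulr1.
have := hx i; have := hy i => a b.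
have := sqr_ge0 (x i 0 + y i 0 + r * 1 - l * x i 0).
have := mulr_ge0 l0 (mulr_ge0 b a).
nra.
Qed.

Theorem lemma1 (R : realType) (k k' : nat) (hk : (1 <= k)%N) (hk' : (1 <= k')%N)
  (eps : R) (heps : 0 < eps)
  (x y : 'cV[R]_k) (x' y' : 'cV[R]_k') (r r' : R)
  (hx : nonneg_vec x) (hy : nonneg_vec y)
  (hx' : nonneg_vec x') (hy' : nonneg_vec y')
  (h1 : (dotv x (ones R k)) ^+ 2 + sqnorm x = eps ^+ 2)
  (h2 : (dotv x' (ones R k')) ^+ 2 + sqnorm x' = eps ^+ 2)
  (h3 : dotv x (ones R k) + dotv x' (ones R k') = r + r' + eps * Num.sqrt 2) :
  sqnorm (x + y + r *: ones R k) + sqnorm (x' + y' + r' *: ones R k') >= eps ^+ 2.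
Proof.
have w0 : 0 < Num.sqrt (2 : R) by rewrite sqrtr_gt0.
have w2 : Num.sqrt (2 : R) ^+ 2 = 2 by rewrite sqr_sqrtr.
have q0 := q_gt0 heps h1.
have q'0 := q_gt0 heps h2.
have qs := q_le hx. have q's := q_le hx'.
have s0 := s_ge0 hx. have s'0 := s_ge0 hx'.
have sp : 0 < dotv x (ones R k).
  rewrite lt_neqAle s0 andbT; apply/negP => /eqP H.
  by move: qs; rewrite -H expr2 mulr0 leNgt q0.
have sp' : 0 < dotv x' (ones R k').
  rewrite lt_neqAle s'0 andbT; apply/negP => /eqP H.
  by move: q's; rewrite -H expr2 mulr0 leNgt q'0.
apply: (@final R _ _ _ _ _ _ _ _ _ _ heps w0 w2 sp sp' q0 (ltW q'0) qs q's h1 h2 h3).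
- by move=> l l0; apply: bound.
- by move=> l l0; apply: bound.
Qed.
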